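(* Let $\mathbf G_*=(\partial:G_1\to G_0)$ be a crossed module. Then $\mathbf Z_0(\mathbf G_* )$ is a subgroup of $\mathrm{Der}_{G_0}(G_0,G_1)$, and there is a commutative diagram with exact rows $$0\to\mathsf H^0(G_0,\mathbf G_* )\to G_1\xrightarrow{\delta}\mathrm{Der}_{G_0}(G_0,G_1)\to\mathsf H^1(G_0,\mathbf G_* )\to 1,$$ $$0\to\pi_1(\mathbf Z_*(\mathbf G_* ))\to G_1\xrightarrow{\delta}\mathbf Z_0(\mathbf G_* )\to\pi_0(\mathbf Z_*(\mathbf G_* ))\to 1,$$ in which the vertical maps are an isomorphism $\pi_1(\mathbf Z_*(\mathbf G_* ))\cong\mathsf H^0(G_0,\mathbf G_* )$, the identity of $G_1$, the inclusion $\mathbf Z_0(\mathbf G_* )\subseteq\mathrm{Der}_{G_0}(G_0,G_1)$ and an injective map $\pi_0(\mathbf Z_*(\mathbf G_* ))\to\mathsf H^1(G_0,\mathbf G_* )$.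
   Context: A crossed module $\mathbf G_*$: groups $G_1,G_0$, a homomorphism $\partial:G_1\to G_0$ and a left action $(x,a)\mapsto{}^xa$ of $G_0$ on $G_1$ by automorphisms, with $\partial({}^x a)=x\partial(a)x^{-1}$ and ${}^{\partial(b)}a=bab^{-1}$. Commutators $[x,t]=xtx^{-1}t^{-1}$. $\mathsf H^0(G_0,\mathbf G_* )=\{a\in G_1:\partial a=1,\ {}^xa=a\ \forall x\in G_0\}$. $\mathrm{Der}_{G_0}(G_0,G_1)$ is the set of pairs $(g,\gamma)$, $g\in G_0$, $\gamma:G_0\to G_1$ with $\gamma(st)=\gamma(s)\,{}^s\gamma(t)$ and $\partial\gamma(t)=[g,t]$; it is a group under $(g,\gamma)(g',\gamma')=(gg',\ t\mapsto{}^g\gamma'(t)\,\gamma(t))$. $\mathsf H^1(G_0,\mathbf G_* )$ is $\mathrm{Der}_{G_0}(G_0,G_1)$ modulo the relation $(g,\gamma)\sim(g',\gamma')$ iff there is $a\in G_1$ with $g'=\partial(a)^{-1}g$ and $\gamma'(t)=a^{-1}\gamma(t)\,{}^ta$ for all $t$. $\mathbf Z_0(\mathbf G_* )$ is the set of $(x,\xi)\in\mathrm{Der}_{G_0}(G_0,G_1)$ additionally satisfying $\xi(\partial a)={}^xa\,a^{-1}$ for all $a\in G_1$. $\delta(c)=(\partial c,\ t\mapsto c\,({}^tc)^{-1})$; $\pi_1(\mathbf Z_*(\mathbf G_* ))=\ker\delta$, $\pi_0(\mathbf Z_*(\mathbf G_* ))=\mathbf Z_0(\mathbf G_* )/\mathrm{Im}\delta$.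 *)

(* Defs.v *)
Record Group := {
  gcar :> Type;
  gmul : gcar -> gcar -> gcar;
  gone : gcar;
  ginv : gcar -> gcar;
  gmulA : forall x y z, gmul x (gmul y z) = gmul (gmul x y) z;
  gmul1l : forall x, gmul gone x = x;
  gmul1r : forall x, gmul x gone = x;
  gmulVl : forall x, gmul (ginv x) x = gone;
  gmulVr : forall x, gmul x (ginv x) = gone
}.

Arguments gmul {_} _ _.
Arguments gone {_}.
Arguments ginv {_} _.

Record CrossedModule := {
  G0 : Group;
  G1 : Group;
  bd : G1 -> G0;
  act : G0 -> G1 -> G1;
  bd_mul : forall a b, bd (gmul a b) = gmul (bd a) (bd b);
  act_mul : forall x a b, act x (gmul a b) = gmul (act x a) (act x b);
  act_one : forall a, act gone a = a;
  act_comp : forall x y a, act (gmul x y) a = act x (act y a);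
  bd_act : forall x a, bd (act x a) = gmul (gmul x (bd a)) (ginv x);
  peiffer : forall a b, act (bd b) a = gmul (gmul b a) (ginv b)
}.

Arguments bd {_} _.
Arguments act {_} _ _.

Section CM.
Variable C : CrossedModule.

Definition comm (x t : G0 C) : G0 C :=
  gmul (gmul (gmul x t) (ginv x)) (ginv t).

Definition DT : Type := (G0 C * (G0 C -> G1 C))%type.

Definition is_der (d : DT) : Prop :=
  (forall s t, snd d (gmul s t) = gmul (snd d s) (act s (snd d t))) /\
  (forall t, bd (snd d t) = comm (fst d) t).

Definition dmul (d d' : DT) : DT :=
  (gmul (fst d) (fst d'), fun t => gmul (act (fst d) (snd d' t)) (snd d t)).

Definition done : DT := (gone, fun _ => gone).

Definition dinv (d : DT) : DT :=
  (ginv (fst d), fun t => act (ginv (fst d)) (ginv (snd d t))).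

Definition in_Z0 (d : DT) : Prop :=
  is_der d /\ forall a, snd d (bd a) = gmul (act (fst d) a) (ginv a).

Definition in_H0 (a : G1 C) : Prop :=
  bd a = gone /\ forall x, act x a = a.

Definition H0set : Type := {a : G1 C | in_H0 a}.

Definition delta (c : G1 C) : DT :=
  (bd c, fun t => gmul c (ginv (act t c))).

Definition H1rel (d d' : DT) : Prop :=
  exists a : G1 C, fst d' = gmul (ginv (bd a)) (fst d) /\
    forall t, snd d' t = gmul (gmul (ginv a) (snd d t)) (act t a).

Definition H1class (d : DT) : DT -> Prop := fun d' => is_der d' /\ H1rel d d'.

(** H^1(G0, G_* ) = Der / ~, as the set of equivalence classes. *)
Definition H1 : Type := {P : DT -> Prop | exists d, is_der d /\ P = H1class d}.

Definition pi1 : Type := {c : G1 C | delta c = done}.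

Definition pi0class (z : DT) : DT -> Prop :=
  fun d => in_Z0 d /\ exists c, d = dmul (delta c) z.

(** π_0(Z_*(G_* )) = Z_0 / Im δ, as the set of cosets. *)
Definition pi0 : Type := {P : DT -> Prop | exists z, in_Z0 z /\ P = pi0class z}.

End CM.

Arguments done {_}.

(* Main.v *)
Require Import Defs.
From Stdlib Require Import FunctionalExtensionality PropExtensionality ProofIrrelevance ClassicalEpsilon.

Section G.
Variable G : Group.
Lemma mulA' (x y z : G) : gmul (gmul x y) z = gmul x (gmul y z).
Proof. symmetry; apply gmulA. Qed.
Lemma mulKl (x y : G) : gmul (ginv x) (gmul x y) = y.
Proof. rewrite gmulA, gmulVl, gmul1l; reflexivity. Qed.
Lemma mulKr (x y : G) : gmul x (gmul (ginv x) y) = y.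
Proof. rewrite gmulA, gmulVr, gmul1l; reflexivity. Qed.
Lemma inv_uniq (x y : G) : gmul x y = gone -> ginv x = y.
Proof. intro h. rewrite <- (mulKl x y), h, gmul1r; reflexivity. Qed.
Lemma inv_mul (x y : G) : ginv (gmul x y) = gmul (ginv y) (ginv x).
Proof. apply inv_uniq. rewrite mulA', mulKr, gmulVr; reflexivity. Qed.
Lemma inv_inv (x : G) : ginv (ginv x) = x.
Proof. apply inv_uniq, gmulVl. Qed.
Lemma inv_one : ginv (@gone G) = gone.
Proof. apply inv_uniq, gmul1l. Qed.
End G.
Arguments mulA' {G}. Arguments mulKl {G}. Arguments mulKr {G}. Arguments inv_uniq {G}. Arguments inv_mul {G}. Arguments inv_inv {G}. Arguments inv_one {G}.

Lemma hom_one (G H : Group) (f : G -> H) (hf : forall x y, f (gmul x y) = gmul (f x) (f y)) :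
  f gone = gone.
Proof.
  assert (e : f gone = gmul (f gone) (f gone)) by (rewrite <- hf, gmul1l; reflexivity).
  rewrite <- (mulKl (f gone) (f gone)) at 1. rewrite <- e, gmulVl. reflexivity.
Qed.
Lemma hom_inv (G H : Group) (f : G -> H) (hf : forall x y, f (gmul x y) = gmul (f x) (f y)) x :
  f (ginv x) = ginv (f x).
Proof. symmetry; apply inv_uniq. rewrite <- hf, gmulVr. apply hom_one; auto. Qed.

Section CMl.
Variable C : CrossedModule.
Lemma bd_one : bd (@gone (G1 C)) = gone. Proof. apply hom_one, bd_mul. Qed.
Lemma bd_inv a : bd (@ginv (G1 C) a) = ginv (bd a). Proof. apply hom_inv, bd_mul. Qed.
Lemma act_one_r (x : G0 C) : act x gone = gone. Proof. apply hom_one, act_mul. Qed.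
Lemma act_inv (x : G0 C) a : act x (ginv a) = ginv (act x a). Proof. apply hom_inv, act_mul. Qed.
Lemma act_comp' (x y : G0 C) a : act x (act y a) = act (gmul x y) a.
Proof. symmetry; apply act_comp. Qed.
End CMl.

Hint Rewrite @mulA' @mulKl @mulKr gmulVl gmulVr gmul1l gmul1r @inv_mul @inv_inv @inv_one
  bd_one bd_inv bd_act bd_mul act_mul act_one act_one_r act_inv act_comp' : grp.
Ltac gn := autorewrite with grp; try reflexivity.

Section Main.
Variable C : CrossedModule.
Implicit Types (a b c : G1 C) (x g s t : G0 C).

Lemma conj_swap b a : gmul b a = gmul (act (bd b) a) b.
Proof. rewrite peiffer. gn. Qed.

Lemma key g s X (gs : G1 C) (h : bd gs = comm C g s) :
  gmul (act (gmul g s) X) gs = gmul gs (act (gmul s g) X).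
Proof. rewrite (conj_swap gs), h. unfold comm. gn. Qed.

Lemma pair_eq (d d' : DT C) : fst d = fst d' -> (forall t, snd d t = snd d' t) -> d = d'.
Proof. destruct d, d'; simpl; intros -> h. f_equal. extensionality t; auto. Qed.

Lemma done_Z0 : in_Z0 C done.
Proof. unfold in_Z0, is_der, done, comm; simpl. repeat split; intros; gn. Qed.

Lemma dmul_Z0 d d' : in_Z0 C d -> in_Z0 C d' -> in_Z0 C (dmul C d d').
Proof.
  destruct d as [g ga], d' as [g' ga']. unfold in_Z0, is_der, dmul, comm; simpl.
  intros [[c1 b1] z1] [[c2 b2] z2]. repeat split; intros.
  - rewrite c1, c2. gn. f_equal. rewrite (gmulA _ (act (gmul g s) (ga' t))), key by apply b1. gn.
  - gn. rewrite b1, b2. unfold comm. gn.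
  - rewrite z1, z2. gn.
Qed.
Lemma dinv_Z0 d : in_Z0 C d -> in_Z0 C (dinv C d).
Proof.
  destruct d as [g ga]. unfold in_Z0, is_der, dinv, comm; simpl.
  intros [[c1 b1] z1]. repeat split; intros.
  - assert (E: gmul (act (ginv g) (ga s)) (act (gmul (ginv g) s) (ga t)) =
               gmul (act (gmul s (ginv g)) (ga t)) (act (ginv g) (ga s))).
    { transitivity (act (ginv g) (gmul (ga s) (act s (ga t)))). gn.
      transitivity (act (ginv g) (gmul (act (gmul g s) (act (ginv g) (ga t))) (ga s))).
      f_equal. rewrite key by apply b1. gn. gn. }
    rewrite c1. gn. rewrite <- !inv_mul, E. reflexivity.
  - gn. rewrite b1. unfold comm. gn.
  - rewrite z1. gn.
Qed.

Lemma dinv_inv d : dmul C d (dinv C d) = done /\ dmul C (dinv C d) d = done.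
Proof. destruct d as [g ga]; unfold dmul, dinv, done; split; apply pair_eq; simpl; intros; gn. Qed.
Lemma H0_iff a : in_H0 C a <-> delta C a = done.
Proof.
  unfold in_H0, delta, done. split.
  - intros [h1 h2]. apply pair_eq; simpl; intros; [exact h1|]. rewrite h2; gn.
  - intro h. split. exact (f_equal fst h).
    intro x. pose proof (equal_f (f_equal snd h) x) as e. simpl in e.
    apply inv_uniq in e. rewrite <- (inv_inv (act x a)), <- e, inv_inv. reflexivity.
Qed.

Lemma delta_der c : is_der C (delta C c).
Proof. unfold is_der, delta, comm; simpl; split; intros; gn. Qed.

Lemma delta_mul c c' : delta C (gmul c c') = dmul C (delta C c) (delta C c').
Proof. unfold delta, dmul. apply pair_eq; simpl; intros; [gn|]. rewrite peiffer. gn. Qed.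

Lemma delta_one : delta C gone = done.
Proof. unfold delta, done. apply pair_eq; simpl; intros; gn. Qed.

Lemma dmulA d1 d2 d3 : dmul C (dmul C d1 d2) d3 = dmul C d1 (dmul C d2 d3).
Proof. unfold dmul. apply pair_eq; simpl; intros; gn. Qed.

Lemma dmul1 d : dmul C done d = d.
Proof. unfold dmul, done. destruct d; apply pair_eq; simpl; intros; gn. Qed.
Lemma dmul1r d : dmul C d done = d.
Proof. unfold dmul, done. destruct d; apply pair_eq; simpl; intros; gn. Qed.

Definition R (d d' : DT C) : Prop := exists c, d' = dmul C (delta C c) d.

Lemma R_refl d : R d d.
Proof. exists gone. rewrite delta_one, dmul1. reflexivity. Qed.
Lemma R_trans d1 d2 d3 : R d1 d2 -> R d2 d3 -> R d1 d3.
Proof. intros [c h] [c' h']. exists (gmul c' c). subst. rewrite delta_mul, dmulA. reflexivity. Qed.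
Lemma R_sym d1 d2 : R d1 d2 -> R d2 d1.
Proof. intros [c h]. exists (ginv c). subst. rewrite <- dmulA, <- delta_mul, gmulVl, delta_one, dmul1. reflexivity. Qed.

Lemma H1rel_R d d' : H1rel C d d' <-> R d d'.
Proof.
  unfold H1rel, R, dmul, delta. split.
  - intros [a [h1 h2]]. exists (ginv a). destruct d', d; simpl in *. apply pair_eq; simpl.
    rewrite h1; gn. intro t. rewrite h2, peiffer; gn.
  - intros [c h]. exists (ginv c). subst; simpl. split; [gn|]. intro t. rewrite peiffer; gn.
Qed.

Lemma class_eq (S : DT C -> Prop) z z' : S z' ->
  ((fun d => S d /\ R z d) = (fun d => S d /\ R z' d) <-> R z z').
Proof.
  intro hs. split.
  - intro e. assert (H : (fun d => S d /\ R z' d) z') by (split; auto; apply R_refl).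
    rewrite <- e in H. apply H.
  - intro r. extensionality d. apply propositional_extensionality.
    split; intros [h1 h2]; split; auto.
    + exact (R_trans _ _ _ (R_sym _ _ r) h2).
    + exact (R_trans _ _ _ r h2).
Qed.

Lemma H1class_R d : H1class C d = (fun d' => is_der C d' /\ R d d').
Proof.
  unfold H1class. extensionality d'. apply propositional_extensionality.
  rewrite H1rel_R. tauto.
Qed.

Lemma R_done d : R done d <-> exists c, d = delta C c.
Proof. unfold R. setoid_rewrite dmul1r. tauto. Qed.

Lemma delta_Z0 c : in_Z0 C (delta C c).
Proof. split; [apply delta_der|]. intro a; simpl. rewrite !peiffer; gn. Qed.

Lemma Z0_der d : in_Z0 C d -> is_der C d.
Proof. intros [h _]; exact h. Qed.
End Main.

Theorem lemma3p11 (C : CrossedModule) :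
  (* Z_0 is a subgroup of Der *)
  ((forall d, in_Z0 C d -> is_der C d) /\
   in_Z0 C done /\
   (forall d d', in_Z0 C d -> in_Z0 C d' -> in_Z0 C (dmul C d d')) /\
   (forall d, in_Z0 C d -> in_Z0 C (dinv C d)) /\
   (forall d, in_Z0 C d -> dmul C d (dinv C d) = done /\ dmul C (dinv C d) d = done)) /\
  (* first row: 0 -> H^0 -> G1 -> Der -> H^1 -> 1 exact *)
  ((forall a, in_H0 C a <-> delta C a = done) /\
   (forall c, is_der C (delta C c)) /\
   (forall c c', delta C (gmul c c') = dmul C (delta C c) (delta C c')) /\
   (forall d, is_der C d -> (H1class C d = H1class C done <-> exists c, d = delta C c)) /\
   (forall P : H1 C, exists d, is_der C d /\ proj1_sig P = H1class C d)) /\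
  (* second row: 0 -> π1 -> G1 -> Z0 -> π0 -> 1 exact *)
  ((forall c, in_Z0 C (delta C c)) /\
   (forall z, in_Z0 C z -> (pi0class C z = pi0class C done <-> exists c, z = delta C c)) /\
   (forall P : pi0 C, exists z, in_Z0 C z /\ proj1_sig P = pi0class C z)) /\
  (* vertical maps *)
  (exists phi : pi1 C -> H0set C,
     (exists phi' : H0set C -> pi1 C,
        (forall x, phi' (phi x) = x) /\ (forall y, phi (phi' y) = y)) /\
     (forall x, proj1_sig (phi x) = proj1_sig x)) /\
  (exists psi : pi0 C -> H1 C,
     (forall P Q, psi P = psi Q -> P = Q) /\
     (forall (P : pi0 C) z, in_Z0 C z -> proj1_sig P = pi0class C z ->
        proj1_sig (psi P) = H1class C z)).
Proof.
  assert (Rd : forall d, R C d done <-> exists c, d = delta C c).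
  { intro d. rewrite <- R_done. split; apply R_sym. }
  assert (H1eq : forall z z', is_der C z' -> (H1class C z = H1class C z' <-> R C z z')).
  { intros z z' h. rewrite !H1class_R. apply class_eq; auto. }
  assert (P0eq : forall z z', in_Z0 C z' -> (pi0class C z = pi0class C z' <-> R C z z')).
  { intros z z' h. apply (class_eq C (in_Z0 C)); auto. }
  split; [|split; [|split; [|split]]].
  - split; [apply Z0_der|]. split; [apply done_Z0|]. split; [apply dmul_Z0|].
    split; [apply dinv_Z0|]. intros; apply dinv_inv.
  - split; [apply H0_iff|]. split; [apply delta_der|]. split; [apply delta_mul|]. split.
    + intros d hd. rewrite H1eq by (apply Z0_der, done_Z0). apply Rd.
    + intros [P [d [h e]]]. exists d. auto.
  - split; [apply delta_Z0|]. split.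
    + intros z hz. rewrite P0eq by apply done_Z0. apply Rd.
    + intros [P [z [h e]]]. exists z. auto.
  - unshelve eexists.
    { intros [x hx]. exists x. apply H0_iff, hx. }
    split.
    + unshelve eexists.
      { intros [x hx]. exists x. apply H0_iff, hx. }
      split; intros [x hx]; simpl; f_equal; apply proof_irrelevance.
    + intros [x hx]; reflexivity.
  - pose (pick := fun P : pi0 C => constructive_indefinite_description _ (proj2_sig P)).
    unshelve eexists.
    { intro P. exists (H1class C (proj1_sig (pick P))).
      exists (proj1_sig (pick P)). split; [apply Z0_der, (proj1 (proj2_sig (pick P)))|reflexivity]. }
    split.
    + intros P Q e. apply (f_equal (@proj1_sig _ _)) in e. simpl in e.
      destruct (proj2_sig (pick P)) as [hP eP]. destruct (proj2_sig (pick Q)) as [hQ eQ].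
      apply H1eq in e; [|apply Z0_der; auto].
      apply P0eq in e; auto.
      assert (PQ : proj1_sig P = proj1_sig Q) by (rewrite eP, eQ; exact e).
      clear - PQ. destruct P as [P p], Q as [Q q]; simpl in PQ. subst Q.
      f_equal. apply proof_irrelevance.
    + intros P z hz e. simpl. destruct (proj2_sig (pick P)) as [hP eP].
      apply H1eq; [apply Z0_der; auto|]. apply P0eq; auto. rewrite <- eP; auto.
Qed.
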